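(* Let $m_1,m_2,n_1\in\mathbb Z_+$. Then $$|\mathcal T(m_1,m_2,n_1)|=|\mathcal T(m_1-1,m_2,n_1-1)|+|\mathcal T^1(m_1+1,m_2-1,n_1-1)|+|\mathcal T^2(m_1-1,m_2,n_1-1)|+|\mathcal T^3(m_1,m_2,n_1)|.$$
   Context: (Type $G_2$ with $\mu(h_2)=0$: here $m_i=\lambda(h_i)$, $n_1=\mu(h_1)$, and shifting $\lambda\mapsto\lambda\pm\varpi_i$, $\mu\mapsto\mu-\varpi_1$ shifts the parameters accordingly.) For arbitrary integers $m_1,m_2,n_1$ define: $\mathcal T(m_1,m_2,n_1)=\{(a,b,c,d,e,f)\in\mathbb Z_+^6: a+b+c+d+e+f\le n_1,\ c\le1,\ b+e-d\le m_2,\ f\le m_1,\ e\le m_2,\ a-2b+2d-e+f\le m_1,\ c+f+2d-e\le m_1\}$; $\mathcal T^1(m_1,m_2,n_1)=\{(a,b,c,d,e)\in\mathbb Z_+^5: a+b+c+d+e\le n_1,\ c\le1,\ b+e-d\le m_2,\ e\le m_2,\ a-2b+2d-e\le m_1,\ c+2d-e\le m_1\}$; $\mathcal T^2(m_1,m_2,n_1)=\{(a,b,c,y)\in\mathbb Z_+^4: a+2b+c+y\le n_1+m_2,\ c\le1,\ a+2y\le m_1+2m_2,\ c+2b+2y\le m_1+2m_2,\ y+b\ge m_2\}$; $\mathcal T^3(m_1,m_2,n_1)=\{(a,b,c,y)\in\mathcal T^2(m_1,m_2,n_1): a=0\ \text{or}\ c+2b+2y=m_1+2m_2\}$. *)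

(* Defs.v *)
From mathcomp Require Import all_boot all_algebra.
Set Implicit Arguments. Unset Strict Implicit. Unset Printing Implicit Defensive.
Import GRing.Theory Num.Theory.
Local Open Scope ring_scope.

Definition inT (m1 m2 n1 : int) (a b c d e f : nat) : bool :=
  [&& (a + b + c + d + e + f)%:Z <= n1, (c <= 1)%N,
      b%:Z + e%:Z - d%:Z <= m2, f%:Z <= m1, e%:Z <= m2,
      a%:Z - 2 * b%:Z + 2 * d%:Z - e%:Z + f%:Z <= m1 &
      c%:Z + f%:Z + 2 * d%:Z - e%:Z <= m1].

Definition inT1 (m1 m2 n1 : int) (a b c d e : nat) : bool :=
  [&& (a + b + c + d + e)%:Z <= n1, (c <= 1)%N,
      b%:Z + e%:Z - d%:Z <= m2, e%:Z <= m2,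
      a%:Z - 2 * b%:Z + 2 * d%:Z - e%:Z <= m1 &
      c%:Z + 2 * d%:Z - e%:Z <= m1].

Definition inT2 (m1 m2 n1 : int) (a b c y : nat) : bool :=
  [&& (a + 2 * b + c + y)%:Z <= n1 + m2, (c <= 1)%N,
      (a + 2 * y)%:Z <= m1 + 2 * m2,
      (c + 2 * b + 2 * y)%:Z <= m1 + 2 * m2 &
      m2 <= (y + b)%:Z].

Definition inT3 (m1 m2 n1 : int) (a b c y : nat) : bool :=
  inT2 m1 m2 n1 a b c y &&
  ((a == 0)%N || ((c + 2 * b + 2 * y)%:Z == m1 + 2 * m2)).

(* Every element of T, T^1 (all coordinates <= sum <= n1)
   and of T^2, T^3 (all coordinates <= a+2b+c+y <= n1+m2) has all coordinates
   < bnd m1 m2 n1 = |n1|+|m2|+1, so the finset cut out of the box 'I_bnd^k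
   is exactly the set in question and #| | is its cardinality. *)
Definition bnd (m1 m2 n1 : int) : nat := (`|n1| + `|m2| + 1)%N.

Definition cardTT (m1 m2 n1 : int) : nat :=
  let N := bnd m1 m2 n1 in
  #|[set x : 'I_N * 'I_N * 'I_N * 'I_N * 'I_N * 'I_N |
      let: (a, b, c, d, e, f) := x in inT m1 m2 n1 a b c d e f]|.

Definition cardTT1 (m1 m2 n1 : int) : nat :=
  let N := bnd m1 m2 n1 in
  #|[set x : 'I_N * 'I_N * 'I_N * 'I_N * 'I_N |
      let: (a, b, c, d, e) := x in inT1 m1 m2 n1 a b c d e]|.

Definition cardTT2 (m1 m2 n1 : int) : nat :=
  let N := bnd m1 m2 n1 in
  #|[set x : 'I_N * 'I_N * 'I_N * 'I_N |
      let: (a, b, c, y) := x in inT2 m1 m2 n1 a b c y]|.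

Definition cardTT3 (m1 m2 n1 : int) : nat :=
  let N := bnd m1 m2 n1 in
  #|[set x : 'I_N * 'I_N * 'I_N * 'I_N |
      let: (a, b, c, y) := x in inT3 m1 m2 n1 a b c y]|.

(* Main.v *)
Require Import Defs.
From mathcomp Require Import all_boot all_algebra zify.
Import GRing.Theory Num.Theory.

Local Open Scope nat_scope.

Definition S6 K (P : nat -> nat -> nat -> nat -> nat -> nat -> bool) :=
  \sum_(a < K) \sum_(b < K) \sum_(c < K) \sum_(d < K) \sum_(e < K) \sum_(f < K)
     (P a b c d e f : nat).
Definition S5 K (P : nat -> nat -> nat -> nat -> nat -> bool) :=
  \sum_(a < K) \sum_(b < K) \sum_(c < K) \sum_(d < K) \sum_(e < K)
     (P a b c d e : nat).
Definition S4 K (P : nat -> nat -> nat -> nat -> bool) :=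
  \sum_(a < K) \sum_(b < K) \sum_(c < K) \sum_(d < K) (P a b c d : nat).

Lemma card_sumb (T : finType) (Q : pred T) : #|[set u | Q u]| = \sum_u (Q u : nat).
Proof.
rewrite -sum1_card big_mkcond /=; apply: eq_bigr => u _; rewrite inE; by case: (Q u).
Qed.

Lemma sum_pair (X Y : finType) (G : X * Y -> nat) :
  \sum_p G p = \sum_(x : X) \sum_(y : Y) G (x, y).
Proof. by rewrite pair_big; apply: eq_bigr => -[]. Qed.

Lemma card_im (T U : finType) (g : T -> U) (P : pred U) :
  injective g -> (forall u, P u -> exists t, g t = u) ->
  #|[set t | P (g t)]| = #|[set u | P u]|.
Proof.
move=> ig hP; rewrite -(card_imset _ ig); apply: eq_card => u.
apply/imsetP/idP.
  by case=> t; rewrite inE => Pt ->; rewrite inE.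
rewrite inE => Pu; have [t gt] := hP u Pu.
by exists t; rewrite // inE gt.
Qed.
Lemma card6 N K (P : nat -> nat -> nat -> nat -> nat -> nat -> bool) :
  N <= K -> (forall a b c d e f, P a b c d e f ->
     [&& a < N, b < N, c < N, d < N, e < N & f < N]) ->
  #|[set x : 'I_N * 'I_N * 'I_N * 'I_N * 'I_N * 'I_N |
      let: (a, b, c, d, e, f) := x in P a b c d e f]| = S6 K P.
Proof.
move=> le hP.
pose w := widen_ord le.
pose g (x : 'I_N * 'I_N * 'I_N * 'I_N * 'I_N * 'I_N) :=
  let: (a, b, c, d, e, f) := x in (w a, w b, w c, w d, w e, w f).
pose Q (u : 'I_K * 'I_K * 'I_K * 'I_K * 'I_K * 'I_K) :=
  let: (a, b, c, d, e, f) := u in P a b c d e f.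
have -> : #|[set x : 'I_N * 'I_N * 'I_N * 'I_N * 'I_N * 'I_N |
      let: (a, b, c, d, e, f) := x in P a b c d e f]| = #|[set x | Q (g x)]|.
  by apply: eq_card => -[[[[[a b] c] d] e] f]; rewrite !inE.
rewrite card_im.
- rewrite card_sumb !sum_pair /S6; done.
- move=> [[[[[a b] c] d] e] f] [[[[[a' b'] c'] d'] e'] f'] /=.
  by case=> /val_inj -> /val_inj -> /val_inj -> /val_inj -> /val_inj -> /val_inj ->.
- move=> [[[[[a b] c] d] e] f] /= /hP /andP[ha /andP[hb /andP[hc /andP[hd /andP[he hf]]]]].
  exists (Ordinal ha, Ordinal hb, Ordinal hc, Ordinal hd, Ordinal he, Ordinal hf).
  by rewrite /=; congr (_, _, _, _, _, _); apply: val_inj.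
Qed.

Lemma card5 N K (P : nat -> nat -> nat -> nat -> nat -> bool) :
  N <= K -> (forall a b c d e, P a b c d e ->
     [&& a < N, b < N, c < N, d < N & e < N]) ->
  #|[set x : 'I_N * 'I_N * 'I_N * 'I_N * 'I_N |
      let: (a, b, c, d, e) := x in P a b c d e]| = S5 K P.
Proof.
move=> le hP.
pose w := widen_ord le.
pose g (x : 'I_N * 'I_N * 'I_N * 'I_N * 'I_N) :=
  let: (a, b, c, d, e) := x in (w a, w b, w c, w d, w e).
pose Q (u : 'I_K * 'I_K * 'I_K * 'I_K * 'I_K) :=
  let: (a, b, c, d, e) := u in P a b c d e.
have -> : #|[set x : 'I_N * 'I_N * 'I_N * 'I_N * 'I_N |
      let: (a, b, c, d, e) := x in P a b c d e]| = #|[set x | Q (g x)]|.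
  by apply: eq_card => -[[[[a b] c] d] e]; rewrite !inE.
rewrite card_im.
- rewrite card_sumb !sum_pair /S5; done.
- move=> [[[[a b] c] d] e] [[[[a' b'] c'] d'] e'] /=.
  by case=> /val_inj -> /val_inj -> /val_inj -> /val_inj -> /val_inj ->.
- move=> [[[[a b] c] d] e] /= /hP /andP[ha /andP[hb /andP[hc /andP[hd he]]]].
  exists (Ordinal ha, Ordinal hb, Ordinal hc, Ordinal hd, Ordinal he).
  by rewrite /=; congr (_, _, _, _, _); apply: val_inj.
Qed.

Lemma card4 N K (P : nat -> nat -> nat -> nat -> bool) :
  N <= K -> (forall a b c d, P a b c d ->
     [&& a < N, b < N, c < N & d < N]) ->
  #|[set x : 'I_N * 'I_N * 'I_N * 'I_N |
      let: (a, b, c, d) := x in P a b c d]| = S4 K P.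
Proof.
move=> le hP.
pose w := widen_ord le.
pose g (x : 'I_N * 'I_N * 'I_N * 'I_N) :=
  let: (a, b, c, d) := x in (w a, w b, w c, w d).
pose Q (u : 'I_K * 'I_K * 'I_K * 'I_K) :=
  let: (a, b, c, d) := u in P a b c d.
have -> : #|[set x : 'I_N * 'I_N * 'I_N * 'I_N |
      let: (a, b, c, d) := x in P a b c d]| = #|[set x | Q (g x)]|.
  by apply: eq_card => -[[[a b] c] d]; rewrite !inE.
rewrite card_im.
- rewrite card_sumb !sum_pair /S4; done.
- move=> [[[a b] c] d] [[[a' b'] c'] d'] /=.
  by case=> /val_inj -> /val_inj -> /val_inj -> /val_inj ->.
- move=> [[[a b] c] d] /= /hP /andP[ha /andP[hb /andP[hc hd]]].
  exists (Ordinal ha, Ordinal hb, Ordinal hc, Ordinal hd).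
  by rewrite /=; congr (_, _, _, _); apply: val_inj.
Qed.

Lemma shift_in (G H : nat -> nat) k :
  (forall i, G i.+1 = H i) -> H k = 0 ->
  \sum_(i < k.+1) G i = G 0 + \sum_(i < k.+1) H i.
Proof.
move=> GH Hk; rewrite big_ord_recl big_ord_recr /= Hk addn0; congr (_ + _).
by apply: eq_bigr => i _; rewrite GH.
Qed.

Lemma sum_ext (G : nat -> nat) K L :
  (forall i, K <= i -> G i = 0) -> K <= L ->
  \sum_(0 <= i < K) G i = \sum_(0 <= i < L) G i.
Proof.
move=> h1 le; rewrite [RHS](big_cat_nat _ (n := K)) //= [X in _ + X]big1_seq ?addn0 //.
by move=> i /=; rewrite mem_index_iota => /andP[hi _]; exact: h1.
Qed.

Lemma sum_shift (G : nat -> nat) K s :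
  (forall i, i < s -> G i = 0) -> (forall i, K <= i -> G i = 0) ->
  \sum_(i < K) G i = \sum_(i < K) G (i + s).
Proof.
move=> h0 h1.
rewrite -(big_mkord xpredT G) -(big_mkord xpredT (fun i => G (i + s))).
have -> : \sum_(0 <= i < K) G (i + s) = \sum_(s <= i < K + s) G i.
  by rewrite -[X in \sum_(X <= _ < K + s) _](add0n s) big_addn addnK.
rewrite (@sum_ext G K (K + s)) //; last exact: leq_addr.
rewrite [LHS](big_cat_nat _ (n := s)) //=; last exact: leq_addl.
rewrite big1_seq ?add0n //.
  by move=> i /=; rewrite mem_index_iota => /andP[_ hi]; exact: h0.
Qed.
Definition inE (M1 M2 N1 : int) a b c d := inT1 M1 M2 N1 a b c d 0.

Lemma stepA (m1 m2 n1 k : nat) : n1 + m2 + 3 <= k ->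
  S6 k.+1 (inT m1 m2 n1) =
  S5 k.+1 (fun a b c d e => inT m1 m2 n1 a b c d e 0) +
  S6 k.+1 (inT (m1%:Z - 1)%R m2 (n1%:Z - 1)%R).
Proof.
move=> hk; rewrite /S6 /S5.
rewrite -big_split; apply: eq_bigr => a _.
rewrite -big_split; apply: eq_bigr => b _.
rewrite -big_split; apply: eq_bigr => c _.
rewrite -big_split; apply: eq_bigr => d _.
rewrite -big_split; apply: eq_bigr => e _.
rewrite (@shift_in (fun f => nat_of_bool (inT m1 m2 n1 a b c d e f)) (fun f => nat_of_bool (inT (m1%:Z - 1)%R m2 (n1%:Z - 1)%R a b c d e f)) k) //.
- move=> i; rewrite /inT; lia.
- rewrite /inT; lia.
Qed.

Lemma stepB (m1 m2 n1 k : nat) : n1 + m2 + 3 <= k ->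
  S5 k.+1 (fun a b c d e => inT m1 m2 n1 a b c d e 0) =
  S4 k.+1 (inE m1 m2 n1) +
  S5 k.+1 (inT1 (m1%:Z + 1)%R (m2%:Z - 1)%R (n1%:Z - 1)%R).
Proof.
move=> hk; rewrite /S5 /S4.
rewrite -big_split; apply: eq_bigr => a _.
rewrite -big_split; apply: eq_bigr => b _.
rewrite -big_split; apply: eq_bigr => c _.
rewrite -big_split; apply: eq_bigr => d _.
rewrite (@shift_in (fun e => nat_of_bool (inT m1 m2 n1 a b c d e 0)) (fun e => nat_of_bool (inT1 (m1%:Z + 1)%R (m2%:Z - 1)%R (n1%:Z - 1)%R a b c d e)) k).
- congr (_ + _); rewrite /inE /inT /inT1; lia.
- move=> i; rewrite /inT /inT1; lia.
- rewrite /inT1; lia.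
Qed.

Lemma stepC (m1 m2 n1 k : nat) : n1 + m2 + 3 <= k ->
  S4 k.+1 (inE m1 m2 n1) =
  S4 k.+1 (inE (m1%:Z - 1)%R m2 (n1%:Z - 1)%R) +
  S4 k.+1 (fun a b c d => ((a == 0) || (Posz (c + 2 * d) == Posz m1)) && inE m1 m2 n1 a b c d).
Proof.
move=> hk.
transitivity (S4 k.+1 (fun a b c d => ~~((a == 0) || (Posz (c + 2 * d) == Posz m1)) && inE m1 m2 n1 a b c d) +
  S4 k.+1 (fun a b c d => ((a == 0) || (Posz (c + 2 * d) == Posz m1)) && inE m1 m2 n1 a b c d)).
  rewrite /S4.
  rewrite -big_split; apply: eq_bigr => a _.
  rewrite -big_split; apply: eq_bigr => b _.
  rewrite -big_split; apply: eq_bigr => c _.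
  rewrite -big_split; apply: eq_bigr => d _.
  by case: (_ || _); case: (inE _ _ _ _ _ _ _).
congr (_ + _); rewrite /S4.
rewrite (@shift_in
  (fun a => \sum_(b < k.+1) \sum_(c < k.+1) \sum_(d < k.+1)
     nat_of_bool (~~((a == 0) || (Posz (c + 2 * d) == Posz m1)) && inE m1 m2 n1 a b c d))
  (fun a => \sum_(b < k.+1) \sum_(c < k.+1) \sum_(d < k.+1)
     nat_of_bool (inE (m1%:Z - 1)%R m2 (n1%:Z - 1)%R a b c d)) k).
- rewrite big1 ?add0n // => b _; rewrite big1 // => c _; rewrite big1 // => d _.
- move=> a /=; apply: eq_bigr => b _; apply: eq_bigr => c _; apply: eq_bigr => d _.
  rewrite /inE /inT1; lia.
- rewrite big1 // => b _; rewrite big1 // => c _; rewrite big1 // => d _.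
  rewrite /inE /inT1; lia.
Qed.

Lemma stepD (m2 n1 k : nat) (M1 N1 : int) (R : nat -> nat -> int -> bool) :
  n1 + m2 + 3 <= k -> (N1 <= Posz n1)%R ->
  S4 k.+1 (fun a b c d => R a c (Posz (c + 2 * d)) && inE M1 m2 N1 a b c d) =
  S4 k.+1 (fun a b c y => R a c (Posz (c + 2 * b + 2 * y) - 2 * Posz m2)%R
                          && inT2 M1 m2 N1 a b c y).
Proof.
move=> hk hN; rewrite /S4.
apply: eq_bigr => a _; apply: eq_bigr => b _; apply: eq_bigr => c _.
case: (leqP b m2) => hb.
- rewrite [RHS](@sum_shift (fun y => nat_of_bool (R a c (Posz (c + 2 * b + 2 * y) - 2 * Posz m2)%R
                          && inT2 M1 m2 N1 a b c y)) k.+1 (m2 - b)).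
  + apply: eq_bigr => d _.
    have -> : (Posz (c + 2 * b + 2 * (d + (m2 - b))) - 2 * Posz m2)%R = Posz (c + 2 * d) by lia.
    congr (nat_of_bool (_ && _)); rewrite /inE /inT1 /inT2; lia.
  + move=> i hi /=.
    have -> : inT2 M1 m2 N1 a b c i = false by rewrite /inT2; lia.
    by rewrite andbF.
  + move=> i hi /=.
    have -> : inT2 M1 m2 N1 a b c i = false by rewrite /inT2; lia.
    by rewrite andbF.
- rewrite [LHS](@sum_shift (fun d => nat_of_bool (R a c (Posz (c + 2 * d))
                          && inE M1 m2 N1 a b c d)) k.+1 (b - m2)).
  + apply: eq_bigr => y _.
    have -> : (Posz (c + 2 * b + 2 * y) - 2 * Posz m2)%R = Posz (c + 2 * (y + (b - m2))) by lia.
    congr (nat_of_bool (_ && _)); rewrite /inE /inT1 /inT2; lia.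
  + move=> i hi /=.
    have -> : inE M1 m2 N1 a b c i = false by rewrite /inE /inT1; lia.
    by rewrite andbF.
  + move=> i hi /=.
    have -> : inE M1 m2 N1 a b c i = false by rewrite /inE /inT1; lia.
    by rewrite andbF.
Qed.

Local Open Scope ring_scope.

Theorem lemma6p4 (m1 m2 n1 : nat) :
  cardTT m1%:Z m2%:Z n1%:Z =
  (cardTT (m1%:Z - 1) m2%:Z (n1%:Z - 1)
   + cardTT1 (m1%:Z + 1) (m2%:Z - 1) (n1%:Z - 1)
   + cardTT2 (m1%:Z - 1) m2%:Z (n1%:Z - 1)
   + cardTT3 m1%:Z m2%:Z n1%:Z)%N.
Proof.
have hk : (n1 + m2 + 3 <= (n1 + m2 + 3))%N by [].
move: hk; set k := (n1 + m2 + 3)%N => hk.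
rewrite /cardTT /cardTT1 /cardTT2 /cardTT3 /=.
rewrite (@card6 _ k.+1 (inT m1 m2 n1)); first last.
  - by move=> a b c d e f; rewrite /inT /bnd; lia.
  - by rewrite /bnd; lia.
rewrite (@card6 _ k.+1 (inT (m1%:Z - 1) m2 (n1%:Z - 1))); first last.
  - by move=> a b c d e f; rewrite /inT /bnd; lia.
  - by rewrite /bnd; lia.
rewrite (@card5 _ k.+1 (inT1 (m1%:Z + 1) (m2%:Z - 1) (n1%:Z - 1))); first last.
  - by move=> a b c d e; rewrite /inT1 /bnd; lia.
  - by rewrite /bnd; lia.
rewrite (@card4 _ k.+1 (inT2 (m1%:Z - 1) m2 (n1%:Z - 1))); first last.
  - by move=> a b c d; rewrite /inT2 /bnd; lia.
  - by rewrite /bnd; lia.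
rewrite (@card4 _ k.+1 (inT3 m1 m2 n1)); first last.
  - by move=> a b c d; rewrite /inT3 /inT2 /bnd; lia.
  - by rewrite /bnd; lia.
rewrite stepA // stepB // stepC //.
have e1 : S4 k.+1 (inE (m1%:Z - 1) m2 (n1%:Z - 1)) = S4 k.+1 (inT2 (m1%:Z - 1) m2 (n1%:Z - 1)).
  exact: (@stepD m2 n1 k (m1%:Z - 1) (n1%:Z - 1) (fun _ _ _ => true) hk ltac:(lia)).
have e2 : S4 k.+1 (fun a b c d => ((a == 0)%N || (Posz (c + 2 * d) == Posz m1)) && inE m1 m2 n1 a b c d)
   = S4 k.+1 (inT3 m1 m2 n1).
  rewrite (@stepD m2 n1 k m1 n1 (fun a _ t => (a == 0)%N || (t == Posz m1))) //.
  rewrite /S4; apply: eq_bigr => a _; apply: eq_bigr => b _; apply: eq_bigr => c _.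
  apply: eq_bigr => d _; rewrite /inT3 /inT2; lia.
rewrite e1 e2; lia.
Qed.
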